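(* A valued Abelian group $(G,+,p)$ is of class $\mathcal{O}_0$ if and only if it may be enlarged to a valued Abelian group $(\tilde G,+,\tilde p)$ such that the set of elements of finite order of $\tilde G$ is dense in $\tilde G$.
   Context: A value on an Abelian group $G$ is $p\colon G\to[0,\infty)$ with $p(x)=0\iff x=0$, $p(-x)=p(x)$, $p(x+y)\leqslant p(x)+p(y)$; it induces the metric $p(x-y)$. $(G,+,p)$ is of class $\mathcal{O}_0$ if $\lim_{n\to\infty}p(na)/n=0$ for every $a\in G$. Enlarging means $G\subseteq\tilde G$, the addition of $\tilde G$ extends that of $G$ and $\tilde p$ extends $p$. *)

(* Defs.v *)
From HB Require Import structures.
From mathcomp Require Import all_boot all_order all_algebra.
From mathcomp Require Import all_classical all_reals all_analysis.
Set Implicit Arguments. Unset Strict Implicit. Unset Printing Implicit Defensive.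
Import Order.TTheory GRing.Theory Num.Theory.
Local Open Scope classical_set_scope.
Local Open Scope ring_scope.

Definition is_value (R : realType) (G : zmodType) (p : G -> R) : Prop :=
  (forall x, 0 <= p x) /\
  (forall x, p x = 0 <-> x = 0) /\
  (forall x, p (- x) = p x) /\
  (forall x y, p (x + y) <= p x + p y).

Definition class_O0 (R : realType) (G : zmodType) (p : G -> R) : Prop :=
  forall a : G, (fun n : nat => p (a *+ n) / n%:R) @ \oo --> (0 : R^o).

Definition finite_order (G : zmodType) (x : G) : Prop :=
  exists n : nat, (0 < n)%N /\ x *+ n = 0.

Definition dense_for (R : realType) (G : zmodType) (q : G -> R)
  (S : G -> Prop) : Prop :=
  forall (x : G) (e : R), 0 < e -> exists y, S y /\ q (x - y) < e.

(* Main.v *)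
Require Import Defs.
From HB Require Import structures.
From mathcomp Require Import all_boot all_order all_algebra.
From mathcomp Require Import all_classical all_reals all_analysis.
From mathcomp Require Import ring lra.
Import Order.TTheory GRing.Theory Num.Theory.
Local Open Scope ring_scope.
Set Implicit Arguments. Unset Strict Implicit. Unset Printing Implicit Defensive.

Definition nI (G : zmodType) (i : (G * nat)%type) : int := ((i.2).+1)%:Z.

Definition Tpred (G : zmodType) (t : (G * nat)%type -> int) : Prop :=
  (forall i, t i = (t i %% nI i)%Z) /\
  exists S : seq (G * nat)%type, forall i, i \notin S -> t i = 0.

Definition Tt (G : zmodType) := {t : (G * nat)%type -> int | Tpred t}.

HB.instance Definition _ (G : zmodType) := gen_eqMixin (Tt G).
HB.instance Definition _ (G : zmodType) := gen_choiceMixin (Tt G).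

Lemma Tt_inj (G : zmodType) (x y : Tt G) : proj1_sig x = proj1_sig y -> x = y.
Proof.
case: x => x hx; case: y => y hy /= exy; subst y.
by rewrite (Prop_irrelevance hx hy).
Qed.

Lemma nI_gt0 (G : zmodType) (i : (G * nat)%type) : (0 < nI i)%R.
Proof. by rewrite /nI ltz_nat. Qed.

Lemma nI_neq0 (G : zmodType) (i : (G * nat)%type) : nI i != 0.
Proof. by rewrite gt_eqF // nI_gt0. Qed.

Lemma Tpred0 (G : zmodType) : Tpred (fun _ : (G * nat)%type => 0 : int).
Proof. by split => [i|]; [rewrite mod0z | exists [::]]. Qed.

Lemma TpredD (G : zmodType) (x y : Tt G) :
  Tpred (fun i => (proj1_sig x i + proj1_sig y i) %% nI i)%Z.
Proof.
case: x => x [hx [S hS]]; case: y => y [hy [S' hS']] /=.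
split => [i|]; first by rewrite modz_mod.
exists (S ++ S') => i; rewrite mem_cat negb_or => /andP[h1 h2].
by rewrite hS // hS' // mod0z.
Qed.

Lemma TpredN (G : zmodType) (x : Tt G) :
  Tpred (fun i => (- proj1_sig x i) %% nI i)%Z.
Proof.
case: x => x [hx [S hS]] /=.
split => [i|]; first by rewrite modz_mod.
by exists S => i hi; rewrite hS // oppr0 mod0z.
Qed.

Definition Tzero (G : zmodType) : Tt G := exist _ _ (Tpred0 G).
Definition Tadd (G : zmodType) (x y : Tt G) : Tt G := exist _ _ (TpredD x y).
Definition Topp (G : zmodType) (x : Tt G) : Tt G := exist _ _ (TpredN x).

Lemma TaddA (G : zmodType) : associative (@Tadd G).
Proof.
move=> x y z; apply: Tt_inj => /=; apply: funext => i.
by rewrite modzDml modzDmr addrA.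
Qed.

Lemma TaddC (G : zmodType) : commutative (@Tadd G).
Proof. by move=> x y; apply: Tt_inj => /=; apply: funext => i; rewrite addrC. Qed.

Lemma Tadd0 (G : zmodType) : left_id (@Tzero G) (@Tadd G).
Proof.
move=> [x [hx hS]]; apply: Tt_inj => /=; apply: funext => i.
by rewrite add0r -hx.
Qed.

Lemma TaddN (G : zmodType) : left_inverse (@Tzero G) (@Topp G) (@Tadd G).
Proof.
move=> x; apply: Tt_inj => /=; apply: funext => i.
by rewrite modzDml addNr mod0z.
Qed.

HB.instance Definition _ (G : zmodType) :=
  GRing.isZmodule.Build (Tt G) (@TaddA G) (@TaddC G) (@Tadd0 G) (@TaddN G).

Lemma Tval_add (G : zmodType) (x y : Tt G) i :
  proj1_sig (x + y) i = ((proj1_sig x i + proj1_sig y i) %% nI i)%Z.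
Proof. by []. Qed.
Lemma Tval_opp (G : zmodType) (x : Tt G) i :
  proj1_sig (- x) i = ((- proj1_sig x i) %% nI i)%Z.
Proof. by []. Qed.
Lemma Tval0 (G : zmodType) i : proj1_sig (0 : Tt G) i = 0.
Proof. by []. Qed.
Lemma v0 (R : realType) (V : zmodType) (q : V -> R) : is_value q -> q 0 = 0.
Proof. by case=> _ [h _]; apply/h. Qed.

Lemma vMn (R : realType) (V : zmodType) (q : V -> R) : is_value q ->
  forall x n, q (x *+ n) <= n%:R * q x.
Proof.
move=> hq x; elim=> [|n IH]; first by rewrite mulr0n (v0 hq) mul0r.
case: hq => _ [_ [_ htri]].
rewrite mulrS; apply: le_trans (htri _ _) _.
by rewrite -natr1 mulrDl mul1r addrC; apply: lerD.
Qed.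

Lemma vMz (R : realType) (V : zmodType) (q : V -> R) : is_value q ->
  forall x m, q (x *~ m) <= `|(m%:~R : R)| * q x.
Proof.
move=> hq x [n|n].
  by change (q (x *+ n) <= `|(n%:R : R)| * q x); rewrite normr_nat; apply: vMn.
rewrite NegzE mulrNz.
have := hq => -[_ [_ [hN _]]]; rewrite hN.
rewrite mulrNz normrN.
by change (q (x *+ n.+1) <= `|(n.+1%:R : R)| * q x); rewrite normr_nat; apply: vMn.
Qed.

Lemma vsum (R : realType) (V : zmodType) (q : V -> R) (I : Type) : is_value q ->
  forall (s : seq I) (F : I -> V), q (\sum_(i <- s) F i) <= \sum_(i <- s) q (F i).
Proof.
move=> hq; elim=> [|a s IH] F; first by rewrite !big_nil (v0 hq).
rewrite !big_cons; have := hq => -[_ [_ [_ htri]]].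
by apply: le_trans (htri _ _) _; apply: lerD.
Qed.

Lemma vB (R : realType) (V : zmodType) (q : V -> R) : is_value q ->
  forall x y, q (x - y) = q (y - x).
Proof. by case=> _ [_ [hN _]] x y; rewrite -opprB hN. Qed.

Lemma sum_sub_zero (V : zmodType) (I : eqType) (S S2 : seq I) (F : I -> V) :
  uniq S -> uniq S2 -> {subset S <= S2} -> (forall i, i \notin S -> F i = 0) ->
  \sum_(i <- S2) F i = \sum_(i <- S) F i.
Proof.
move=> uS uS2 sub F0.
rewrite (bigID (fun i => i \in S)) /= [X in _ + X]big1 ?addr0; last first.
  by move=> i /F0.
rewrite -big_filter; apply: perm_big; apply: uniq_perm.
- exact: filter_uniq.
- exact: uS.
move=> i; rewrite mem_filter; apply/andP/idP => [[]//|h]; split => //.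
exact: sub.
Qed.

Definition cI (R : realType) (G : zmodType) (p : G -> R) (i : (G * nat)%type) : R :=
  (p (i.1 *+ (i.2).+1) + 1) / ((i.2).+1)%:R.

Definition Rep (G : zmodType) := ((G * nat -> int) * seq (G * nat))%type.

Definition repOK (G : zmodType) (t : Tt G) (r : Rep G) : Prop :=
  uniq r.2 /\ (forall i, i \notin r.2 -> r.1 i = 0) /\
  (forall i, (nI i %| r.1 i - proj1_sig t i)%Z).

Definition cost (R : realType) (G : zmodType) (p : G -> R) (g : G) (r : Rep G) : R :=
  p (g - \sum_(i <- r.2) i.1 *~ r.1 i) + \sum_(i <- r.2) `|((r.1 i)%:~R : R)| * cI p i.

Definition costs (R : realType) (G : zmodType) (p : G -> R) (h : (G * Tt G)%type) : set R :=
  fun x => exists r, repOK h.2 r /\ x = cost p h.1 r.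

Definition qv (R : realType) (G : zmodType) (p : G -> R) (h : (G * Tt G)%type) : R :=
  inf (costs p h).

Lemma cI_gt0 (R : realType) (G : zmodType) (p : G -> R) : is_value p ->
  forall i, 0 < cI p i.
Proof.
case=> h0 _ i; rewrite /cI divr_gt0 // ?ltr0n //.
by apply: (lt_le_trans ltr01); rewrite lerDr.
Qed.

Lemma cost_ge0 (R : realType) (G : zmodType) (p : G -> R) : is_value p ->
  forall g r, 0 <= cost p g r.
Proof.
move=> hp g r; rewrite /cost addr_ge0 //; first by case: hp.
apply: sumr_ge0 => i _; rewrite mulr_ge0 //.
exact: ltW (cI_gt0 hp i).
Qed.

Lemma costs_ne (R : realType) (G : zmodType) (p : G -> R) h : nonempty (costs p h).
Proof.
case: h => g [t [ht [S hS]]].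
exists (cost p g (t, undup S)); exists (t, undup S); split => //.
split; first exact: undup_uniq.
split; first by move=> i; rewrite mem_undup => /hS.
by move=> i /=; rewrite subrr dvdz0.
Qed.

Lemma qv_le (R : realType) (G : zmodType) (p : G -> R) : is_value p ->
  forall h r, repOK h.2 r -> qv p h <= cost p h.1 r.
Proof.
move=> hp h r hr; apply: ge_inf; last by exists r.
by exists 0 => x [r' [_ ->]]; apply: cost_ge0.
Qed.

Lemma qv_ge (R : realType) (G : zmodType) (p : G -> R) h y :
  (forall r, repOK h.2 r -> y <= cost p h.1 r) -> y <= qv p h.
Proof.
move=> H; apply: lb_le_inf; first exact: costs_ne.
by move=> x [r [hr ->]]; apply: H.
Qed.

Lemma term_bound (R : realType) (G : zmodType) (p : G -> R) : is_value p ->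
  forall i k, (nI i %| k)%Z -> p (i.1 *~ k) <= `|(k%:~R : R)| * cI p i.
Proof.
move=> hp i k /dvdzP [m ->].
rewrite mulrC mulrzA.
apply: le_trans (vMz hp _ _) _.
change (`|(m%:~R : R)| * p (i.1 *+ (i.2).+1) <= `|((nI i * m)%:~R : R)| * cI p i).
rewrite intrM normrM /nI /cI.
have -> : (((i.2).+1)%:Z%:~R : R) = ((i.2).+1)%:R by [].
rewrite normr_nat.
have -> : ((i.2).+1%:R * `|(m%:~R : R)|) * ((p (i.1 *+ (i.2).+1) + 1) / (i.2).+1%:R)
   = `|(m%:~R : R)| * (p (i.1 *+ (i.2).+1) + 1).
  by field; rewrite (_ : 1 + _ = (i.2).+1%:R) ?pnatr_eq0 // addrC natr1.
by rewrite ler_wpM2l // lerDl.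
Qed.

Lemma L1 (R : realType) (G : zmodType) (p : G -> R) : is_value p ->
  forall g r, repOK (0 : Tt G) r -> p g <= cost p g r.
Proof.
move=> hp g [k S] [uS [kS hk]]; rewrite /cost /=.
rewrite /= in uS kS hk.
set A := \sum_(i <- S) _.
have := hp => -[_ [_ [_ htri]]].
rewrite -{1}(subrK A g); apply: le_trans (htri _ _) _; rewrite lerD2l.
apply: le_trans (vsum hp _ _) _; apply: ler_sum => i _.
apply: term_bound => //; move: (hk i); rewrite /=.
by rewrite subr0.
Qed.

Lemma Tnz (G : zmodType) (t : Tt G) i k :
  (nI i %| k - proj1_sig t i)%Z -> proj1_sig t i != 0 -> k != 0.
Proof.
case: t => t [ht _] /= hd; apply: contra => /eqP k0; move: hd.
rewrite k0 sub0r rpredN => hd; apply/eqP; rewrite ht.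
exact/dvdz_mod0P.
Qed.

Lemma L2 (R : realType) (G : zmodType) (p : G -> R) : is_value p ->
  forall g (t : Tt G) r i, repOK t r -> proj1_sig t i != 0 -> cI p i <= cost p g r.
Proof.
move=> hp g t [k S] i [uS [kS hk]] ti; rewrite /cost /=.
rewrite /= in uS kS hk.
have k0 := Tnz (hk i) ti.
have iS : i \in S by apply: contraT => /kS e; rewrite e eqxx in k0.
rewrite [X in _ + X](bigD1_seq i) //=.
have A0 : 0 <= p (g - \sum_(i0 <- S) i0.1 *~ k i0) by case: hp.
have B0 : 0 <= \sum_(j <- S | j != i) `|((k j)%:~R : R)| * cI p j.
  by apply: sumr_ge0 => j _; rewrite mulr_ge0 //; exact: ltW (cI_gt0 hp j).
have C : cI p i <= `|((k i)%:~R : R)| * cI p i.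
  rewrite ler_peMl //; first exact: ltW (cI_gt0 hp i).
  by rewrite -intr_norm ler1z -gtz0_ge1 normr_gt0.
lra.
Qed.

Lemma dvd_mod (n a b : int) : (n %| a - (b %% n)%Z)%Z = (n %| a - b)%Z.
Proof. by rewrite -!eqz_mod_dvd modz_mod. Qed.

Definition rneg (G : zmodType) (r : Rep G) : Rep G := (fun i => - r.1 i, r.2).

Lemma L3 (R : realType) (G : zmodType) (p : G -> R) : is_value p ->
  forall g (t : Tt G) r, repOK t r ->
  repOK (- t) (rneg r) /\ cost p (- g) (rneg r) = cost p g r.
Proof.
move=> hp g t [k S] [uS [kS hk]]; rewrite /= in uS kS hk.
split.
  split => //; split => [i /kS /= ->|i]; first by rewrite oppr0.
  by rewrite /= dvd_mod -opprD rpredN.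
rewrite /cost /=.
have -> : \sum_(i <- S) i.1 *~ - k i = - \sum_(i <- S) i.1 *~ k i.
  by rewrite -sumrN; apply: eq_bigr => i _; rewrite mulrNz.
have := hp => -[_ [_ [hN _]]].
rewrite -opprD hN; congr (_ + _); apply: eq_bigr => i _.
by rewrite mulrNz normrN.
Qed.

Definition radd (G : zmodType) (r r' : Rep G) : Rep G :=
  (fun i => r.1 i + r'.1 i, undup (r.2 ++ r'.2)).

Lemma L4 (R : realType) (G : zmodType) (p : G -> R) : is_value p ->
  forall g g' (t t' : Tt G) r r', repOK t r -> repOK t' r' ->
  repOK (t + t') (radd r r') /\
  cost p (g + g') (radd r r') <= cost p g r + cost p g' r'.
Proof.
move=> hp g g' t t' [k S] [k' S'] [uS [kS hk]] [uS' [kS' hk']].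
rewrite /= in uS kS hk uS' kS' hk'.
have sub1 : {subset S <= undup (S ++ S')}.
  by move=> i hi; rewrite mem_undup mem_cat hi.
have sub2 : {subset S' <= undup (S ++ S')}.
  by move=> i hi; rewrite mem_undup mem_cat hi orbT.
split.
  split; first exact: undup_uniq.
  split => [i|i].
    by rewrite /= mem_undup mem_cat negb_or => /andP[/kS -> /kS' ->]; rewrite addr0.
  rewrite /= dvd_mod.
  have -> : k i + k' i - (sval t i + sval t' i) = (k i - sval t i) + (k' i - sval t' i).
    by rewrite opprD addrACA.
  exact: rpredD.
rewrite /cost /=.
have E1 : \sum_(i <- undup (S ++ S')) i.1 *~ (k i + k' i) =
    \sum_(i <- S) i.1 *~ k i + \sum_(i <- S') i.1 *~ k' i.
  rewrite -(sum_sub_zero uS (undup_uniq (S ++ S')) sub1); last first.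
    by move=> i /kS ->; rewrite mulr0z.
  rewrite -(sum_sub_zero uS' (undup_uniq (S ++ S')) sub2); last first.
    by move=> i /kS' ->; rewrite mulr0z.
  by rewrite -big_split; apply: eq_bigr => i _; rewrite mulrzDr.
have E2 : \sum_(i <- undup (S ++ S')) `|((k i + k' i)%:~R : R)| * cI p i <=
    \sum_(i <- S) `|((k i)%:~R : R)| * cI p i + \sum_(i <- S') `|((k' i)%:~R : R)| * cI p i.
  rewrite -(sum_sub_zero uS (undup_uniq (S ++ S')) sub1); last first.
    by move=> i /kS ->; rewrite normr0 mul0r.
  rewrite -(sum_sub_zero uS' (undup_uniq (S ++ S')) sub2); last first.
    by move=> i /kS' ->; rewrite normr0 mul0r.
  rewrite -big_split; apply: ler_sum => i _ /=; rewrite -mulrDl.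
  rewrite ler_wpM2r //; first exact: ltW (cI_gt0 hp i).
  by rewrite intrD ler_normD.
rewrite E1.
have := hp => -[_ [_ [_ htri]]].
have -> : g + g' - (\sum_(i <- S) i.1 *~ k i + \sum_(i <- S') i.1 *~ k' i) =
   (g - \sum_(i <- S) i.1 *~ k i) + (g' - \sum_(i <- S') i.1 *~ k' i).
  by rewrite opprD addrACA.
have := htri (g - \sum_(i <- S) i.1 *~ k i) (g' - \sum_(i <- S') i.1 *~ k' i).
move: E2; set a := \sum_(i <- undup _) _; set b := \sum_(i <- S) _; set c := \sum_(i <- S') _.
lra.
Qed.

Definition emb (G : zmodType) (a : G) : (G * Tt G)%type := (a, 0).

Lemma emb_zmod (G : zmodType) : zmod_morphism (@emb G).
Proof. by move=> x y; rewrite /emb; congr pair; rewrite subr0. Qed.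

HB.instance Definition _ (G : zmodType) :=
  GRing.isZmodMorphism.Build G (G * Tt G)%type (@emb G) (@emb_zmod G).

Definition embA (G : zmodType) : {additive G -> (G * Tt G)%type} := @emb G.

Lemma Q0 (R : realType) (G : zmodType) (p : G -> R) : is_value p ->
  forall g, qv p (g, 0) = p g.
Proof.
move=> hp g; apply/eqP; rewrite eq_le; apply/andP; split.
  have hr : repOK (0 : Tt G) ((fun _ => 0), [::]).
    split => //; split => // i; rewrite /= subr0; exact: dvdz0.
  apply: le_trans (qv_le hp (h := (g, 0)) hr) _.
  by rewrite /cost /= !big_nil subr0 addr0.
by apply: qv_ge => r hr; apply: L1.
Qed.

Lemma Qge0 (R : realType) (G : zmodType) (p : G -> R) : is_value p ->
  forall h, 0 <= qv p h.
Proof. by move=> hp h; apply: qv_ge => r _; apply: cost_ge0. Qed.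

Lemma Qneg_le (R : realType) (G : zmodType) (p : G -> R) : is_value p ->
  forall h, qv p (- h) <= qv p h.
Proof.
move=> hp [g t]; apply: qv_ge => r hr /=.
have [hr' ec] := L3 hp g hr.
rewrite -ec; exact: (qv_le hp (h := (- g, - t)) hr').
Qed.

Lemma Qtri (R : realType) (G : zmodType) (p : G -> R) : is_value p ->
  forall x y, qv p (x + y) <= qv p x + qv p y.
Proof.
move=> hp [g t] [g' t'].
have H1 : forall r r', repOK t r -> repOK t' r' ->
    qv p ((g, t) + (g', t')) <= cost p g r + cost p g' r'.
  move=> r r' hr hr'; have [hr'' hc] := L4 hp g g' hr hr'.
  apply: le_trans hc; exact: (qv_le hp (h := (g + g', t + t')) hr'').
have H2 : forall r', repOK t' r' -> qv p ((g, t) + (g', t')) - cost p g' r' <= qv p (g, t).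
  move=> r' hr'; apply: qv_ge => r hr /=; rewrite lerBlDr; exact: H1.
rewrite -lerBlDl; apply: qv_ge => r' hr' /=; rewrite lerBlDl -lerBlDr.
exact: H2.
Qed.

Lemma Tt_nz (G : zmodType) (t : Tt G) : t != 0 -> exists i, proj1_sig t i != 0.
Proof.
move=> tn0; apply: contra_notP (negP tn0) => H; apply/eqP; apply: Tt_inj.
apply: funext => i /=; apply/eqP; apply: contra_notT H => hi; by exists i.
Qed.

Lemma Qvalue (R : realType) (G : zmodType) (p : G -> R) : is_value p ->
  is_value (qv p).
Proof.
move=> hp; split; first exact: Qge0.
split.
  move=> [g t]; split => [h0|[-> ->]]; last by rewrite Q0 //; exact: v0.
  have t0 : t = 0.
    apply/eqP; apply: contraT => /Tt_nz [i hi].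
    have := qv_ge (p := p) (h := (g, t)) (y := cI p i) (fun r hr => L2 hp g hr hi).
    by rewrite h0 leNgt cI_gt0.
  subst t; rewrite Q0 // in h0; have := hp => -[_ [hz _]].
  by rewrite (proj1 (hz g) h0).
split.
  move=> x; apply/eqP; rewrite eq_le Qneg_le //=.
  by rewrite -{1}(opprK x) Qneg_le.
exact: Qtri.
Qed.

Lemma pair_mulrn (U V : zmodType) (a : U) (b : V) n :
  ((a, b) : (U * V)%type) *+ n = (a *+ n, b *+ n).
Proof.
elim: n => [|n IH]; first by rewrite !mulr0n.
by rewrite !mulrS IH.
Qed.

Lemma Tmuln (G : zmodType) (t : Tt G) m i :
  proj1_sig (t *+ m) i = ((proj1_sig t i * m%:Z) %% nI i)%Z.
Proof.
elim: m => [|m IH]; first by rewrite mulr0n mulr0 mod0z.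
rewrite mulrS /= IH modzDmr.
by rewrite -addn1 PoszD mulrDr mulr1 addrC.
Qed.

Lemma Ttors (G : zmodType) (t : Tt G) : exists n, (0 < n)%N /\ t *+ n = 0.
Proof.
have [ht [S hS]] := proj2_sig t.
exists (\prod_(i <- S) (i.2).+1)%N; split.
  by apply: prodn_gt0.
apply: Tt_inj; apply: funext => i; rewrite Tmuln /=.
have [iS|iS] := boolP (i \in S); last by rewrite hS // mul0r mod0z.
apply/dvdz_mod0P; apply: dvdz_mull.
rewrite /nI dvdzE /= (big_rem i) //=.
exact: dvdn_mulr.
Qed.

Lemma fin_ord (G : zmodType) (t : Tt G) : finite_order ((0, t) : (G * Tt G)%type).
Proof.
have [n [n0 hn]] := Ttors t; exists n; split => //.
by rewrite pair_mulrn mul0rn hn.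
Qed.

Definition delta (G : zmodType) (i0 : (G * nat)%type) : (G * nat)%type -> int :=
  fun i => if i == i0 then (1 %% nI i)%Z else 0.

Lemma delta_pred (G : zmodType) (i0 : (G * nat)%type) : Tpred (delta i0).
Proof.
split => [i|]; first by rewrite /delta; case: ifP => _; rewrite ?modz_mod ?mod0z.
by exists [:: i0] => i; rewrite inE /delta => /negbTE ->.
Qed.

Definition deltaT (G : zmodType) (i0 : (G * nat)%type) : Tt G := exist _ _ (delta_pred i0).

Lemma q_delta (R : realType) (G : zmodType) (p : G -> R) : is_value p ->
  forall g N, qv p (g, deltaT (g, N)) <= cI p (g, N).
Proof.
move=> hp g N.
set i0 := (g, N).
have hr : repOK (deltaT i0) ((fun i => if i == i0 then 1 else 0), [:: i0]).
  split => //; split => [i|i] /=; first by rewrite inE => /negbTE ->.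
  rewrite /delta; case: ifP => _; last by rewrite subr0 dvdz0.
  by rewrite dvd_mod subrr dvdz0.
apply: le_trans (qv_le hp (h := (g, deltaT i0)) hr) _.
rewrite /cost /= !big_seq1 eqxx /= subrr (v0 hp) add0r normr1 mul1r.
by [].
Qed.

Lemma Qdense (R : realType) (G : zmodType) (p : G -> R) : is_value p ->
  class_O0 p -> dense_for (qv p) (@finite_order (G * Tt G)%type).
Proof.
move=> hp hO [g t] e e0.
have e2 : 0 < e / 2 by rewrite divr_gt0.
have /cvgrPdist_lt h1 := hO g.
have {}h1 := h1 _ e2.
have h2 := nbhs_infty_gtr (2 / e).
have h3 := nbhs_infty_gt 0.
have h12 := proj2 (near_andP _ _ eventually_filter) (conj h1 h2).
have h123 := proj2 (near_andP _ _ eventually_filter) (conj h12 h3).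
have [n [[hn1 hn2] hn3]] := filter_ex h123.
rewrite /= sub0r normrN in hn1.
have n0 : (0 < n)%N by [].
move: n0 hn1 hn2 hn3; case: n => [//|N] _ hn1 hn2 _.
exists (0, t - deltaT (g, N)); split; first exact: fin_ord.
have -> : ((g, t) - (0, t - deltaT (g, N)) : (G * Tt G)%type) = (g, deltaT (g, N)).
  congr pair => /=; first by rewrite subr0.
  by rewrite opprB addrC subrK.
apply: le_lt_trans (q_delta hp g N) _.
rewrite /cI /= mulrDl.
have pge : 0 <= p (g *+ N.+1) by case: hp.
move: hn1; rewrite ger0_norm ?divr_ge0 // => hn1.
have : N.+1%:R^-1 < e / 2.
  rewrite -div1r ltr_pdivrMr ?ltr0n // mulrC -ltr_pdivrMr //.
  by rewrite div1r invf_div.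
move: hn1; rewrite mul1r.
move=> a b; rewrite [ltRHS]splitr; exact: ltrD a b.
Qed.

Lemma back (R : realType) (G : zmodType) (p : G -> R) (H : zmodType)
  (f : {additive G -> H}) (q : H -> R) :
  is_value q -> (forall x, q (f x) = p x) -> dense_for q (@finite_order H) ->
  class_O0 p.
Proof.
move=> hq hf hd a; apply/cvgrPdist_lt => e e0.
have e2 : 0 < e / 2 by rewrite divr_gt0.
have [y [[m [m0 hm]] hy]] := hd (f a) (e / 2) e2.
set C := \sum_(k < m) q (y *+ k).
have qge : forall z, 0 <= q z by case: hq.
have C0 : 0 <= C by apply: sumr_ge0.
have bound : forall n, p (a *+ n) <= n%:R * (e / 2) + C.
  move=> n; rewrite -hf raddfMn.
  have -> : f a *+ n = (f a - y) *+ n + y *+ (n %% m).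
    rewrite mulrnBl.
    rewrite [in y *+ n](divn_eq n m) mulrnDr mulnC mulrnA hm mul0rn add0r.
    by rewrite subrK.
  have := hq => -[_ [_ [_ htri]]].
  apply: le_trans (htri _ _) _; apply: lerD.
    apply: le_trans (vMn hq _ _) _; rewrite ler_wpM2l //.
    exact: ltW.
  rewrite /C (bigD1 (Ordinal (ltn_pmod n m0))) //= lerDl.
  by apply: sumr_ge0.
apply: filterS2 (nbhs_infty_gtr (2 * C / e)) (nbhs_infty_gt 0) => n h1 h2.
have np : 0 < (n%:R : R) by rewrite ltr0n.
have pge : 0 <= p (a *+ n) by rewrite -hf; apply: qge.
rewrite sub0r normrN ger0_norm ?divr_ge0 //.
rewrite ltr_pdivrMr //.
apply: le_lt_trans (bound n) _.
move: h1; rewrite ltr_pdivrMr // => h1.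
nra.
Qed.

Unset Implicit Arguments.

Theorem theorem2p12 (R : realType) (G : zmodType) (p : G -> R)
  (hp : is_value p) :
  class_O0 p <->
  exists (H : zmodType) (f : {additive G -> H}) (q : H -> R),
    injective f /\ is_value q /\ (forall x : G, q (f x) = p x) /\
    dense_for q (@finite_order H).
Proof.
split.
  move=> hO; exists (G * Tt G)%type, (embA G), (qv p).
  split; first by move=> x y [].
  split; first exact: Qvalue.
  split; first by move=> x; exact: Q0.
  exact: Qdense.
move=> [H [f [q [_ [hq [hf hd]]]]]]; exact: back hq hf hd.
Qed.
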